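(* Let $X,Y$ be separable metric spaces, $\nu$ a locally finite Borel measure on $X$, and $f:X\to Y$ a Borel function with bounded image. Then for $\nu$-a.e. $p\in X$ the following holds: whenever $(B_n)_{n\ge1}$ is a sequence of Borel sets with $\mathrm{diam}(B_n)\to0$, $p\in B_n$ for all $n$, and such that there is $C>0$ with $0<\nu(4B_n)\le C\nu(B_n)$ for all $n$, one has $$\lim_{n\to\infty}\frac1{\nu(B_n)}\int_{B_n}\mathrm{dist}_Y(f(p),f(x))\,d\nu(x)=0.$$
   Context: For $B\subset X$, $4B$ denotes the open neighbourhood $\{x:\mathrm{dist}(x,B)<1.5\,\mathrm{diam}(B)\}$. *)

(* Defs.v *)
From HB Require Import structures.
From mathcomp Require Import all_boot all_order all_algebra.
From mathcomp Require Import all_classical all_reals all_analysis.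
Set Implicit Arguments. Unset Strict Implicit. Unset Printing Implicit Defensive.
Import Order.TTheory GRing.Theory Num.Theory.
Local Open Scope classical_set_scope.
Local Open Scope ring_scope.

Definition separable_space (T : topologicalType) : Prop :=
  exists S : set T, countable S /\ dense S.

Section metric_defs.
Context {R : realType} {X : metricType R}.

(* diameter of a set (in the extended reals; -oo for the empty set) *)
Definition diam (B : set X) : \bar R :=
  ereal_sup [set (mdist x y)%:E | x in B & y in B].

(* distance from a point to a set (+oo for the empty set) *)
Definition dist_set (x : X) (B : set X) : \bar R :=
  ereal_inf [set (mdist x y)%:E | y in B].

Definition enlarge4 (B : set X) : set X :=
  [set x | (dist_set x B < (3%:R / 2%:R)%:E * diam B)%E].

Definition bounded_image (T : Type) (f : T -> X) : Prop :=
  exists (y0 : X) (M : R), forall t, mdist y0 (f t) <= M.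
End metric_defs.

(* The Borel measurable space on a metric space X.  The library's measurable
   types are pointed, so we give a point x0 of X. *)
Definition borel {R : realType} {X : metricType R} (x0 : X) : Type := X.

Section borel_instance.
Context {R : realType} {X : metricType R} (x0 : X).
HB.instance Definition _ := Metric.on (borel x0).
HB.instance Definition _ := isPointed.Build (borel x0) x0.
HB.instance Definition _ := @isMeasurable.Build (sigma_display (@open X))
  (borel x0) <<s @open X >> (@sigma_algebra0 _ setT (@open X))
  (@sigma_algebraC (borel x0) (@open X))
  (@sigma_algebra_bigcup _ setT (@open X)).
End borel_instance.

Definition locally_finite {R : realType} {X : metricType R} {x0 : X}
  (nu : set (borel x0) -> \bar R) : Prop :=
  forall x : X, exists2 r : R, 0 < r & (nu (ball x r) < +oo)%E.

(* Main.v *)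
Require Import Defs.
From HB Require Import structures.
From mathcomp Require Import all_boot all_order all_algebra.
From mathcomp Require Import all_classical all_reals all_analysis.
From mathcomp Require Import ring lra.
From mathcomp Require Import measurable_realfun.
Import Order.TTheory GRing.Theory Num.Theory.
Import numFieldNormedType.Exports.
Local Open Scope classical_set_scope.
Local Open Scope ring_scope.
Set Implicit Arguments. Unset Strict Implicit. Unset Printing Implicit Defensive.
Section geom.
Context {R : realType} {X : metricType R}.
Implicit Types (B : set X) (x y : X).

Lemma diam_ub B x y : B x -> B y -> ((mdist x y)%:E <= diam B)%E.
Proof. by move=> Bx By; apply: ereal_sup_ubound; exists x => //; exists y. Qed.

Lemma dist_le x B y : B y -> (dist_set x B <= (mdist x y)%:E)%E.
Proof. by move=> By; apply: ereal_inf_lbound; exists y. Qed.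

Lemma dist_ge0 x B : (0 <= dist_set x B)%E.
Proof. by apply: le_ereal_inf_tmp => _ [y _ <-]; rewrite lee_fin mdist_ge0. Qed.

Lemma open_dist_lt B (c : \bar R) : open [set x | (dist_set x B < c)%E].
Proof.
rewrite openE => x /= /ereal_inf_lt [_ [y By <-] xyc].
rewrite /interior; apply/nbhs_ballP.
case: c xyc => [r| |] //= xyr; last first.
  exists 1 => //= z _ /=; rewrite (le_lt_trans (dist_le z By))//. exact: ltry.
rewrite lte_fin in xyr.
exists (r - mdist x y); first by rewrite /= subr_gt0.
move=> z; rewrite ballEmdist /= => xz.
rewrite (le_lt_trans (dist_le z By))// lte_fin.
rewrite (le_lt_trans (metric_triangle z x y))//.
by rewrite metric_sym -ltrBrDr.
Qed.

Lemma sub_ball B p r : B p -> (diam B < r%:E)%E -> B `<=` ball p r.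
Proof.
move=> Bp dr x Bx; rewrite ballEmdist /=.
by rewrite -lte_fin (le_lt_trans (diam_ub Bp Bx)).
Qed.

Lemma enlarge4_empty B : (diam B <= 0)%E -> enlarge4 B = set0.
Proof.
move=> d0; apply/seteqP; split => x //=; rewrite /enlarge4 /= => h.
have : ((3%:R / 2%:R)%:E * diam B <= 0)%E.
  by rewrite mule_ge0_le0// lee_fin divr_ge0.
by move=> /(lt_le_trans h); rewrite ltNge dist_ge0.
Qed.

Lemma sub_enlarge4 B B' z : B z -> B' z ->
  (diam B < (3%:R / 2%:R)%:E * diam B')%E -> B `<=` enlarge4 B'.
Proof.
move=> Bz B'z h x Bx; rewrite /enlarge4 /=.
apply: (le_lt_trans (dist_le x B'z)); apply: le_lt_trans h.
exact: diam_ub.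
Qed.

End geom.
Section cover.
Context {R : realType} {X : metricType R}.
Implicit Types (B : set X).

Lemma diam_set0 : diam (@set0 X) = -oo%E.
Proof.
rewrite /diam (_ : [set _ | x in set0 & y in set0] = set0) ?ereal_sup0//.
by apply/seteqP; split => z //= [x].
Qed.

Lemma diam_gt0_nonempty B : (0 < diam B)%E -> B !=set0.
Proof.
move=> h; apply/set0P/negP => /eqP B0; move: h; rewrite B0 diam_set0.
by rewrite ltNge leNye.
Qed.

Lemma diam_real B : (0 < diam B)%E -> (diam B < 1%E)%E ->
  exists2 d : R, diam B = d%:E & 0 < d < 1.
Proof.
case: (diam B) => [d| |] //; rewrite ?lte_fin => h0 h1.
by exists d => //; rewrite h0 h1.
Qed.

Definition meets B B' := B `&` B' !=set0.

Lemma cover_lemma (F : set (set X)) :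
  (forall B, F B -> (0 < diam B)%E /\ (diam B < 1%E)%E) ->
  exists G : set (set X), [/\ G `<=` F,
    (forall B B', G B -> G B' -> meets B B' -> B = B') &
    (forall B, F B -> exists2 B', G B' & B `<=` enlarge4 B')].
Proof.
move=> Fd.
pose disj (G : set (set X)) := forall B B', G B -> G B' -> meets B B' -> B = B'.
pose Om (G : set (set X)) := forall B, F B -> (exists2 B', G B' & meets B B') ->
  exists B', [/\ G B', meets B B' & (diam B < (5%:R / 4%:R)%:E * diam B')%E].
pose P (G : set (set X)) := [/\ G `<=` F, disj G & Om G].
have [A [[AF Adisj AOm] Amax]] : exists A, P A /\ forall (A2 : set (set X)), A `<` A2 -> ~ P A2.
  apply: Zorn_bigcup => Fc FcP Fctot; split.
  - by move=> B [G /FcP [GF _ _] GB]; exact: GF.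
  - move=> B B' [G1 /[dup] G1c /FcP [_ G1d _] G1B] [G2 /[dup] G2c /FcP [_ G2d _] G2B].
    case: (Fctot _ _ G1c G2c) => [G12|G21].
      by apply: G2d => //; exact: G12.
    by apply: G1d => //; exact: G21.
  - move=> B FB [B' [G Gc GB'] mBB'].
    have [_ _ GOm] := FcP _ Gc.
    have [|B'' [GB'' m'' d'']] := GOm _ FB; first by exists B'.
    by exists B''; split => //; exists G.
have claim : forall B, F B -> exists2 B', A B' & meets B B'.
  move=> B1 FB1; apply: contrapT => nB1.
  pose H := [set B | F B /\ forall B', A B' -> ~ meets B B'].
  have HB1 : H B1 by split => // B' AB' m; apply: nB1; exists B'.
  pose s := ereal_sup (diam @` H).
  have s1 : (s <= 1%E)%E.
    by apply: ge_ereal_sup => _ [B [FB _] <-]; apply/ltW; case: (Fd _ FB).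
  have s0 : (0 < s)%E.
    apply: (lt_le_trans (proj1 (Fd _ FB1))); apply: ereal_sup_ubound.
    by exists B1.
  have [t st t0] : exists2 t : R, s = t%:E & 0 < t.
    move: s0 s1; case: s => [t| |] //; rewrite ?lte_fin => t0 _.
    by exists t.
  have : ((4%:R / 5%:R * t)%:E < s)%E.
    by rewrite st lte_fin gtr_pMl// ltr_pdivrMr// mul1r ltr_nat.
  move=> /ereal_sup_gt [_ [B0 HB0 <-] dB0].
  have [FB0 nB0] := HB0.
  have [d0 d0E /andP [d00 d01]] := diam_real (proj1 (Fd _ FB0)) (proj2 (Fd _ FB0)).
  pose A' := A `|` [set B0].
  have B0n := diam_gt0_nonempty (proj1 (Fd _ FB0)).
  have AA' : A `<` A'.
    split; first by move=> B AB; left.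
    move=> /(_ B0 (or_intror erefl)) AB0; apply: (nB0 _ AB0).
    by case: B0n => x Bx; exists x.
  apply: (Amax _ AA'); split.
  - by move=> B [/AF //|-> ].
  - move=> B B' [AB|->] [AB'|->] m.
    + exact: Adisj.
    + by exfalso; apply: (nB0 _ AB); rewrite /meets setIC.
    + by exfalso; apply: (nB0 _ AB').
    + by [].
  - move=> B FB mB.
    have [[B'' AB'' m'']|nA] := pselect (exists2 B', A B' & meets B B').
      have [B3 [AB3 m3 d3]] := AOm _ FB (ex_intro2 _ _ B'' AB'' m'').
      by exists B3; split => //; left.
    have mB0 : meets B B0.
      case: mB => B' [AB'|->] m //.
      by exfalso; apply: nA; exists B'.
    exists B0; split => //; first by right.
    have HB : H B by split => // B' AB' m; apply: nA; exists B'.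
    have : (diam B <= s)%E by apply: ereal_sup_ubound; exists B.
    move=> /le_lt_trans; apply.
    move: dB0; rewrite st d0E -EFinM !lte_fin => h.
    by rewrite -ltr_pdivrMl ?divr_gt0// invf_div.
exists A; split => // B FB.
have [B' AB' m] := claim _ FB.
have [B'' [AB'' m'' d'']] := AOm _ FB (ex_intro2 _ _ B' AB' m).
exists B'' => //.
case: m'' => z [Bz B''z].
apply: (sub_enlarge4 Bz B''z); apply: (lt_le_trans d'').
apply: lee_wpmul2r; first by apply/ltW; case: (Fd _ (AF _ AB'')).
by rewrite lee_fin; lra.
Qed.

End cover.

Section D0.
Context {R : realType}.
Lemma cvge0_lt (u : nat -> \bar R) (e : R) : u @ \oo --> 0%:E -> 0 < e ->
  exists N, forall n, (N <= n)%N -> (u n < e%:E)%E.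
Proof.
move=> /fine_cvgP [ufin ucvg] e0.
have : \forall n \near \oo, (u n < e%:E)%E.
  apply: filterS2 ufin (cvgr_lt _ ucvg _ e0).
  by move=> n un h; rewrite -(fineK un) lte_fin.
by move=> [N _ HN]; exists N.
Qed.
End D0.

Section C.
Context {R : realType} {X : metricType R} (x0 : X).
Local Notation T := (borel x0).
Variable nu : {measure set T -> \bar R}.

Lemma inj_seq (A : set (set T)) : infinite_set A ->
  exists b : nat -> set T, (forall n, A (b n)) /\ injective b.
Proof.
move=> /infiniteP /pcard_leP [f]. exists f; split.
- by move=> n; apply: funS.
- by move=> m n; apply: inj; rewrite in_setT.
Qed.

Lemma disj_countable (W : set T) (G : set (set T)) : (nu W < +oo)%E ->
  measurable W ->
  (forall B, G B -> [/\ measurable B, B `<=` W & (0 < nu B)%E]) ->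
  (forall B B', G B -> G B' -> B `&` B' !=set0 -> B = B') ->
  countable G.
Proof.
move=> Wfin mW HG Gdisj.
pose Gk k := [set B | G B /\ ((k.+1%:R^-1)%:E < nu B)%E].
have GE : G `<=` \bigcup_(k in setT) Gk k.
  move=> B GB; have [mB BW B0] := HG _ GB.
  move: B0; case wE: (nu B) => [w| |] //= B0.
    have w0 : 0 < w by rewrite -lte_fin.
    exists (Num.trunc (w^-1)) => //; split => //.
    rewrite wE lte_fin -[ltRHS]invrK ltf_pV2 ?posrE ?invr_gt0 ?ltr0n//.
    exact: truncnS_gt.
  by exists 0%N => //; split => //; rewrite wE; exact: ltry.
apply: (sub_countable (subset_card_le GE)).
apply: bigcup_countable => [|k _]; first exact: countableP.
apply: finite_set_countable; apply: contrapT => /inj_seq [b [bG binj]].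
have mb i : measurable (b i) by have [] := HG _ (proj1 (bG i)).
have tb : trivIset setT b.
  by move=> i j _ _ h; apply: binj; apply: Gdisj => //; [exact: (proj1 (bG i))|exact: (proj1 (bG j))].
have [w wE] : exists w, nu W = w%:E.
  by exists (fine (nu W)); rewrite fineK// ge0_fin_numE//.
pose n := (Num.trunc (w * k.+1%:R)).+1.
have : (nu (\big[setU/set0]_(i < n) b i) <= nu W)%E.
  apply: le_measure; rewrite ?inE//; first exact: bigsetU_measurable.
  move=> x; rewrite -bigcup_mkord => -[i _ bix].
  by have [_ + _] := HG _ (proj1 (bG i)); apply.
rewrite measure_bigsetU// wE => h.
have : (\sum_(i < n) (k.+1%:R^-1)%:E <= \sum_(i < n) nu (b i))%E.
  by apply: lee_sum => i _; apply/ltW; exact: (proj2 (bG i)).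
move=> /le_trans /(_ h); rewrite sumEFin sumr_const card_ord lee_fin.
have h2 := truncnS_gt (w * k.+1%:R); rewrite -/n in h2.
have h3 : w < n%:R / k.+1%:R by rewrite ltr_pdivlMr ?ltr0n.
have e : k.+1%:R^-1 *+ n = n%:R / k.+1%:R :> R by rewrite mulr_natl.
by rewrite e => hh; move: (lt_le_trans h3 hh); rewrite ltxx.
Qed.

Lemma enum_disj (G : set (set T)) : countable G ->
  (forall B B', G B -> G B' -> B `&` B' !=set0 -> B = B') ->
  exists g : nat -> set T, [/\ (forall n, G (g n) \/ g n = set0),
    (forall B, G B -> exists n, g n = B) & trivIset setT g].
Proof.
move=> /countable_injP [i iinj] Gdisj.
pose g n := xget set0 [set B | G B /\ i B = n].
have gP n : (G (g n) /\ i (g n) = n) \/ g n = set0.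
  have [ex|nex] := pselect (exists B, G B /\ i B = n).
    by left; exact: (xgetPex set0 ex).
  right; apply: xgetPN => B HB; apply: nex; by exists B.
exists g; split.
- by move=> n; case: (gP n) => [[]|]; [left|right].
- move=> B GB; exists (i B).
  have [Gg ig] : G (g (i B)) /\ i (g (i B)) = i B :=
    @xgetPex _ set0 [set B' | G B' /\ i B' = i B] (ex_intro _ B (conj GB erefl)).
  by apply: iinj; rewrite ?inE.
- move=> m n _ _ h.
  have [[Gm im]|m0] := gP m; last by move: h; rewrite m0 set0I => -[].
  have [[Gn iN]|n0] := gP n; last by move: h; rewrite n0 setI0 => -[].
  by rewrite -im -iN (Gdisj _ _ Gm Gn h).
Qed.

Lemma enlarge4_set0 : enlarge4 (@set0 T) = set0.
Proof. by apply: enlarge4_empty; rewrite diam_set0 leNye. Qed.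

Lemma enlarge4_measurable (B : set T) : measurable (enlarge4 B).
Proof. by apply: sub_sigma_algebra; exact: open_dist_lt. Qed.

Lemma cover_bound (A U : set T) (G : set (set T)) (K : R) : 0 <= K ->
  measurable A -> measurable U -> countable G ->
  (forall B B', G B -> G B' -> B `&` B' !=set0 -> B = B') ->
  (forall B, G B -> [/\ measurable B, B `<=` U &
     (nu (enlarge4 B) <= K%:E * nu (B `\` A))%E]) ->
  exists N, [/\ measurable N, (forall B, G B -> enlarge4 B `<=` N) &
    (nu N <= K%:E * nu (U `\` A))%E].
Proof.
move=> K0 mA mU cG Gdisj HG.
have [g [gG gsurj gtriv]] := enum_disj cG Gdisj.
have mg n : measurable (g n) by case: (gG n) => [/HG []|->].
exists (\bigcup_n enlarge4 (g n)); split.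
- by apply: bigcupT_measurable => n; exact: enlarge4_measurable.
- by move=> B /gsurj [n <-] x gx; exists n.
have mU4 : measurable (\bigcup_n enlarge4 (g n)).
  by apply: bigcupT_measurable => n; exact: enlarge4_measurable.
have := @measure_sigma_subadditive _ _ _ nu _ (fun n => enlarge4 (g n))
  (fun n => enlarge4_measurable _) mU4 (@subset_refl _ _).
move=> /le_trans; apply.
apply: (@le_trans _ _ (\sum_(n <oo) (K%:E * nu (g n `\` A)))%E).
  apply: lee_nneseries => n _ //.
  case: (gG n) => [/HG [] //|->].
  by rewrite enlarge4_set0 measure0 mule_ge0.
rewrite nneseriesZl// -measure_semi_bigcup//.
- apply: lee_wpmul2l; first by rewrite lee_fin.
  apply: le_measure; rewrite ?inE.
  + by apply: bigcupT_measurable => n; exact: measurableD.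
  + exact: measurableD.
  + move=> x [n _ [gnx nAx]]; split => //.
    by case: (gG n) gnx => [/HG [_ + _]|->] //; apply.
- by move=> n; exact: measurableD.
- move=> m n _ _ [x [[gmx _] [gnx _]]]; apply: gtriv => //; by exists x.
- by apply: bigcupT_measurable => n; exact: measurableD.
Qed.

Lemma openM (U : set T) : open U -> measurable U.
Proof. by move=> oU; exact: sub_sigma_algebra. Qed.

Lemma decr_small (F : nat -> set T) e : 0 < e -> (nu (F 0%N) < +oo)%E ->
  (forall i, measurable (F i)) -> (forall m n, (m <= n)%N -> F n `<=` F m) ->
  \bigcap_n F n = set0 -> exists N, (nu (F N) < e%:E)%E.
Proof.
move=> e0 F0 mF Fdec F0E.
have Fd : nonincreasing_seq F.
  by move=> m n mn; apply/subsetPset; exact: Fdec.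
have := nonincreasing_cvg_mu F0 mF (bigcap_measurable _ (fun n _ => mF n)) Fd.
rewrite F0E measure0 => h; have [N HN] := cvge0_lt (h (ex_intro _ 0%N I)) e0.
by exists N; exact: HN.
Qed.

Section regularity.
Variables (W : set T) (oW : open W) (Wfin : (nu W < +oo)%E).

Definition reg (A : set T) := forall e, 0 < e -> exists U V, [/\ open U, open V,
  A `<=` U, ~` A `<=` V & (nu (U `&` V `&` W) < e%:E)%E].

Let mW : measurable W := openM oW.

Lemma reg_open U : open U -> reg U.
Proof.
move=> oU e e0.
pose V k := [set x : T | (dist_set x (~` U) < (k.+1%:R^-1)%:E)%E].
pose F k := U `&` V k `&` W.
have mF k : measurable (F k).
  by apply: measurableI => //; apply: measurableI; apply: openM => //; exact: open_dist_lt.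
have [N HN] : exists N, (nu (F N) < e%:E)%E.
  apply: decr_small => //.
  - by apply: le_lt_trans Wfin; apply: le_measure; rewrite ?inE // => x [].
  - move=> m n mn x [[Ux Vx] Wx]; split => //; split => //.
    rewrite /V /= (lt_le_trans Vx)// lee_fin lef_pV2 ?posrE ?ltr0n// ler_nat.
    by rewrite ltnS.
  - apply/seteqP; split => // x Fx.
    have [[Ux _] _] := Fx 0%N I.
    move: oU; rewrite openE => /(_ x Ux); rewrite /interior => /nbhs_ballP [r r0 rU].
    have : ((r%:E) <= dist_set x (~` U))%E.
      apply: le_ereal_inf_tmp => _ [y Uy <-]; rewrite lee_fin leNgt; apply/negP => xy.
      by apply: Uy; apply: rU; rewrite ballEmdist.
    have [[_ Vk] _] := Fx (Num.trunc (r^-1)) I.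
    move=> /le_lt_trans /(_ Vk); rewrite lte_fin -div1r ltr_pdivlMr ?ltr0n// => h1.
    have := truncnS_gt (r^-1); rewrite -[X in X < _]div1r ltr_pdivrMr// => h2.
    by rewrite mulrC in h1; move: (lt_trans h2 h1); rewrite ltxx.
exists U, (V N); split => //; first exact: open_dist_lt.
move=> x Ux; rewrite /V /=; apply: (le_lt_trans (dist_le x Ux)).
by rewrite mdistxx lte_fin invr_gt0 ltr0n.
Qed.

Lemma reg_setC A : reg A -> reg (~` A).
Proof.
move=> rA e e0; have [U [V [oU oV AU AV h]]] := rA e e0.
exists V, U; split => //; first by rewrite setCK.
by rewrite (setIC V U).
Qed.

Lemma reg_bigcup (A : nat -> set T) : (forall n, measurable (A n)) ->
  (forall n, reg (A n)) -> reg (\bigcup_n A n).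
Proof.
move=> mA rA e e0.
have /choice [UV HUV] : forall n, exists UV : set T * set T,
    [/\ open UV.1, open UV.2, A n `<=` UV.1, ~` A n `<=` UV.2 &
      (nu (UV.1 `&` UV.2 `&` W) < (e / (2 ^ (n + 2))%:R)%:E)%E].
  move=> n; have [|U [V [oU oV AU AV h]]] := rA n (e / (2 ^ (n + 2))%:R).
    by rewrite divr_gt0// ltr0n expn_gt0.
  by exists (U, V).
pose E N := (\bigcup_n A n `\` \big[setU/set0]_(i < N) A i) `&` W.
have mE N : measurable (E N).
  apply: measurableI => //; apply: measurableD; first exact: bigcupT_measurable.
  exact: bigsetU_measurable.
have [N HN] : exists N, (nu (E N) < (e / 2)%:E)%E.
  apply: decr_small => //; first by rewrite divr_gt0.
  - by apply: le_lt_trans Wfin; apply: le_measure; rewrite ?inE // => x [].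
  - move=> m n mn x [[Ax nAx] Wx]; split => //; split => // hm; apply: nAx.
    move: hm; rewrite -!bigcup_mkord => -[i /= im Ai]; exists i => //.
    exact: leq_trans im mn.
  - apply/seteqP; split => // x Ex.
    have [[[k _ Akx] _] _] := Ex 0%N I.
    have [[_ nA] _] := Ex k.+1 I; apply: nA.
    by rewrite -bigcup_mkord; exists k => /=.
pose U := \bigcup_n (UV n).1.
pose V := \big[setI/setT]_(i < N) (UV i).2.
have oU : open U by apply: bigcup_open => n _; case: (HUV n).
have oV : open V.
  rewrite /V; apply: (big_ind (fun S : set T => open S)); first exact: openT.
    by move=> ? ? ? ?; exact: openI.
  by move=> i _; case: (HUV i).
exists U, V; split => //.
- by move=> x [n _ Anx]; exists n => //; case: (HUV n) => _ _ + _ _; apply.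
- move=> x nAx; rewrite /V -(bigcap_mkord N (fun i => (UV i).2)) => i _.
  by case: (HUV i) => _ _ _ + _; apply => Aix; apply: nAx; exists i.
pose Z := \bigcup_n ((UV n).1 `&` (UV n).2 `&` W).
have mUVW n : measurable ((UV n).1 `&` (UV n).2 `&` W).
  by case: (HUV n) => oU1 oV1 _ _ _; apply: measurableI => //; apply: measurableI; exact: openM.
have mZ : measurable Z by exact: bigcupT_measurable.
have sub : U `&` V `&` W `<=` E N `|` Z.
  move=> x [[[n _ Ux] Vx] Wx].
  move: Vx; rewrite /V -(bigcap_mkord N (fun i => (UV i).2)) => Vx.
  have [Anx|nAnx] := pselect (A n x); last first.
    right; exists n => //; split => //; split => //.
    by case: (HUV n) => _ _ _ + _; apply.
  have [[i iN Aix]|nex] := pselect (exists2 i, (i < N)%N & A i x).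
    right; exists i => //; split => //; split; last exact: Vx.
    by case: (HUV i) => _ _ + _ _; apply.
  left; split => //; split; first by exists n.
  by rewrite -bigcup_mkord => -[i /= iN Aix]; apply: nex; exists i.
have mU : measurable (U `&` V `&` W).
  by apply: measurableI => //; apply: measurableI; exact: openM.
apply: (le_lt_trans (le_measure _ _ _ sub)); rewrite ?inE//; first exact: measurableU.
apply: (le_lt_trans (measureU2 _ _ _)) => //.
have hZ : (nu Z <= (e / 2)%:E)%E.
  have := @measure_sigma_subadditive _ _ _ nu Z _ mUVW mZ (@subset_refl _ _).
  move=> /le_trans; apply.
  apply: (@le_trans _ _ (\sum_(n <oo) (e / (2 ^ (n + 2))%:R)%:E)%E).
    by apply: lee_nneseries => n _ //; apply/ltW; case: (HUV n).
  have := @cvg_geometric_eseries_half _ e 1; move/cvg_lim => <-//; rewrite expr1.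
have Zfin : nu Z \is a fin_num.
  by rewrite ge0_fin_numE// (le_lt_trans hZ)// ltry.
by rewrite -[e]/(e) (splitr e) EFinD lte_leD.
Qed.

Lemma all_reg A : measurable A -> reg A.
Proof.
move=> mA.
pose K := [set B : set T | measurable B /\ reg B].
have sK : sigma_algebra setT K.
  split.
  - split => // e e0; exists set0, setT; split => //; [exact: open0|exact: openT|].
    by rewrite set0I set0I measure0 lte_fin.
  - move=> B [mB rB]; split; first exact: measurableD.
    by rewrite setTD; exact: reg_setC.
  - move=> F KF; split; first by apply: bigcupT_measurable => n; case: (KF n).
    by apply: reg_bigcup => n; case: (KF n).
have oK : @open T `<=` K by move=> U oU; split; [exact: openM|exact: reg_open].
exact: (smallest_sub sK oK mA).2.
Qed.

Lemma outer_reg A e : measurable A -> 0 < e ->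
  exists U, [/\ open U, A `&` W `<=` U, U `<=` W & (nu (U `\` A) < e%:E)%E].
Proof.
move=> mA e0; have [U [V [oU oV AU AV h]]] := all_reg mA e0.
exists (U `&` W); split.
- exact: openI.
- by move=> x [Ax Wx]; split => //; exact: AU.
- by move=> x [].
apply: le_lt_trans h; apply: le_measure; rewrite ?inE.
- by apply: measurableD => //; apply: openM; exact: openI.
- by apply: measurableI => //; apply: measurableI; exact: openM.
by move=> x [[Ux Wx] nAx]; split => //; split => //; exact: AV.
Qed.

End regularity.
Definition good (A : set T) (C delta : R) (p : T) :=
  exists2 e0 : R, 0 < e0 & forall B : set T, measurable B -> B p ->
    (diam B < e0%:E)%E -> (0 < nu (enlarge4 B))%E ->
    (nu (enlarge4 B) <= C%:E * nu B)%E -> (nu (B `\` A) < delta%:E * nu B)%E.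

Lemma density_step (W A U : set T) (C delta eta : R) : 0 < C -> 0 < delta ->
  open W -> (nu W < +oo)%E -> measurable A -> open U -> U `<=` W ->
  A `&` W `<=` U -> (nu (U `\` A) <= eta%:E)%E ->
  exists N, [/\ measurable N, (nu N <= (C / delta * eta)%:E)%E &
    forall p, A p -> W p -> ~ good A C delta p -> N p].
Proof.
move=> C0 d0 oW Wfin mA oU UW AWU hU.
pose F := [set B : set T | [/\ measurable B, B `<=` U, (0 < diam B)%E /\ (diam B < 1%E)%E,
  (0 < nu (enlarge4 B))%E /\ (nu (enlarge4 B) <= C%:E * nu B)%E &
  (delta%:E * nu B <= nu (B `\` A))%E]].
have [G [GF Gdisj Gcov]] := @cover_lemma _ T F (fun B FB => let: And5 _ _ h _ _ := FB in h).
have nuB0 B : F B -> (0 < nu B)%E.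
  move=> [_ _ _ [h1 h2] _]; rewrite lt0e measure_ge0 andbT.
  apply/negP => /eqP B0; move: h2; rewrite B0 mule0 => h2.
  by move: (lt_le_trans h1 h2); rewrite ltxx.
have cG : countable G.
  apply: (disj_countable Wfin (openM oW)) => // B GB.
  have FB := GF _ GB; case: (FB) => mB BU _ _ _; split => //; last exact: nuB0.
  exact: subset_trans UW.
have hK : 0 <= C / delta by rewrite divr_ge0// ltW.
have HG : forall B, G B -> [/\ measurable B, B `<=` U &
     (nu (enlarge4 B) <= (C / delta)%:E * nu (B `\` A))%E].
  move=> B /GF [mB BU _ [_ h4] hd]; split => //.
  apply: (le_trans h4).
  apply: (@le_trans _ _ ((C / delta)%:E * (delta%:E * nu B))%E); last first.
    by apply: lee_wpmul2l => //; rewrite lee_fin divr_ge0// ltW.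
  by rewrite muleA -EFinM divfK// gt_eqF.
have [N [mN N4 Nbd]] := cover_bound hK mA (openM oU) cG Gdisj HG.
exists N; split => //.
  apply: (le_trans Nbd); rewrite (EFinM (C / delta) eta); apply: lee_wpmul2l => //.
move=> p Ap Wp ngood; apply: contrapT => nNp; apply: ngood.
have Up : U p by apply: AWU.
move: oU; rewrite openE => /(_ p Up); rewrite /interior => /nbhs_ballP [r r0 rU].
exists (Num.min r 1); first by rewrite lt_min r0 ltr01.
move=> B mB Bp dB n4 h4; rewrite ltNge; apply/negP => hd.
have FB : F B.
  split => //.
  - apply: subset_trans rU; apply: subset_trans (sub_ball Bp dB) _.
    by apply: le_ball; rewrite ge_min lexx.
  - split; last by apply: (lt_le_trans dB); rewrite lee_fin ge_min lexx orbT.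
    rewrite ltNge; apply/negP => d0'.
    by move: n4; rewrite enlarge4_empty// measure0 ltxx.
have [B' GB' BB'] := Gcov _ FB.
by apply: nNp; apply: N4 GB' _ (BB' _ Bp).
Qed.
Lemma le_invS0 (x : \bar R) : (forall m, (x <= (m.+1%:R^-1)%:E)%E) -> (0 <= x)%E -> x = 0%E.
Proof.
move=> hx xge0; have := hx 0%N; rewrite invr1.
move: xge0 hx; case: x => [r| |] //; rewrite ?lee_fin => r0 hr _.
congr (_%:E); apply/eqP; rewrite eq_le r0 andbT leNgt; apply/negP => r0'.
have := hr (Num.trunc (r^-1)); rewrite lee_fin -div1r ler_pdivlMr ?ltr0n// => h1.
have := truncnS_gt (r^-1); rewrite -[X in X < _]div1r ltr_pdivrMr// => h2.
by rewrite mulrC in h1; move: (lt_le_trans h2 h1); rewrite ltxx.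
Qed.

Lemma density (W A : set T) (C delta : R) : 0 < C -> 0 < delta ->
  open W -> (nu W < +oo)%E -> measurable A ->
  {ae nu, forall p, A p -> W p -> good A C delta p}.
Proof.
move=> C0 d0 oW Wfin mA.
have /choice [N HN] : forall m : nat, exists N, [/\ measurable N,
    (nu N <= (m.+1%:R^-1)%:E)%E &
    forall p, A p -> W p -> ~ good A C delta p -> N p].
  move=> m.
  have eta0 : 0 < delta / C / m.+1%:R by rewrite !divr_gt0// ltr0n.
  have [U [oU AWU UW hU]] := outer_reg oW Wfin mA eta0.
  have [N [mN hN Np]] := density_step C0 d0 oW Wfin mA oU UW AWU (ltW hU).
  exists N; split => //; apply: (le_trans hN); rewrite lee_fin le_eqVlt; apply/orP; left.
  by apply/eqP; field; rewrite ?gt_eqF// ltr0n.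
exists (\bigcap_m N m); split.
- by apply: bigcapT_measurable => m; case: (HN m).
- apply: le_invS0 => // m; case: (HN m) => mNm hNm _; apply: le_trans hNm.
  apply: le_measure; rewrite ?inE//; first by apply: bigcapT_measurable => k; case: (HN k).
  by move=> x h; exact: h m I.
- move=> p /= /not_implyP [Ap /not_implyP [Wp ng]] m _.
  by case: (HN m) => _ _; apply.
Qed.
End C.

Section F.
Context {R : realType}.

Lemma open_ball_m (Z : metricType R) (y : Z) (r : R) : open (ball y r).
Proof.
rewrite openE => z; rewrite ballEmdist /= => yz.
rewrite /interior; apply/nbhs_ballP; exists (r - mdist y z) => /=.
  by rewrite subr_gt0.
move=> w; rewrite !ballEmdist /= => zw.
rewrite (le_lt_trans (metric_triangle y z w))//.
by rewrite -ltrBrDl.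
Qed.

Lemma open_annulus (Z : metricType R) (y : Z) (a b : R) :
  open [set z | a < mdist y z < b].
Proof.
rewrite openE => z /= /andP [h1 h2].
rewrite /interior; apply/nbhs_ballP; exists (Num.min (mdist y z - a) (b - mdist y z)) => /=.
  by rewrite lt_min !subr_gt0 h1 h2.
move=> w; rewrite ballEmdist /= lt_min => /andP [zw1 zw2].
have t1 := metric_triangle y z w.
have t2 := metric_triangle y w z.
rewrite (metric_sym w z) in t2.
apply/andP; split; lra.
Qed.

Lemma small_inv (e : R) : 0 < e -> exists n : nat, n.+1%:R^-1 < e.
Proof.
move=> e0; exists (Num.trunc (e^-1)).
rewrite -[ltRHS]invrK ltf_pV2 ?posrE ?invr_gt0 ?ltr0n//.
exact: truncnS_gt.
Qed.

Lemma cvge0_le (u : nat -> \bar R) :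
  (forall e, 0 < e -> exists N, forall n, (N <= n)%N -> (0 <= u n)%E /\ (u n <= e%:E)%E) ->
  u @ \oo --> 0%:E.
Proof.
move=> H; apply/fine_cvgP; split.
  have [N HN] := H 1 ltr01; exists N => // n /= Nn.
  have [h0 h1] := HN n Nn; rewrite ge0_fin_numE// (le_lt_trans h1)// ltry//.
apply/cvgrPdist_le => e e0; have [N HN] := H e e0; exists N => // n /= Nn.
have [h0 h1] := HN n Nn.
have uf : u n \is a fin_num by rewrite ge0_fin_numE// (le_lt_trans h1)// ltry//.
rewrite sub0r normrN ger0_norm ?fine_ge0// -lee_fin fineK//.
Qed.

Lemma dense_enum (Z : metricType R) (z0 : Z) : separable_space Z ->
  exists e : nat -> Z, forall p (r : R), 0 < r -> exists i, mdist p (e i) < r.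
Proof.
move=> [S [cS dS]]; have /countable_injP [i iinj] := cS.
pose e n := xget z0 [set s | S s /\ i s = n].
exists e => p r r0.
have : ball p r `&` S !=set0.
  apply: dS; last exact: open_ball_m.
  by exists p; rewrite ballEmdist /= mdistxx.
move=> [s [ps Ss]]; exists (i s).
have [Se ie] : S (e (i s)) /\ i (e (i s)) = i s :=
  @xgetPex _ z0 [set s' | S s' /\ i s' = i s] (ex_intro _ s (conj Ss erefl)).
have -> : e (i s) = s by apply: iinj; rewrite ?inE.
by move: ps; rewrite ballEmdist.
Qed.

Lemma measurable_dist {d} (T : measurableType d) (Y : metricType R) (y0 : Y) (f : T -> borel y0) (y : Y) :
  measurable_fun setT f -> measurable_fun setT (fun x => mdist y (f x)).
Proof.
move=> mf; apply: (measurability _ (measurable_realfun.RGenOpens.measurableE R)).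
move=> _ [_ [a [b ->]] <-].
have -> : setT `&` (fun x => mdist y (f x)) @^-1` `]a, b[%classic =
    setT `&` f @^-1` [set z | a < mdist y z < b].
  by apply/seteqP; split => x /= [_ h]; split => //; move: h; rewrite /= in_itv.
apply: mf => //; apply: sub_sigma_algebra; exact: open_annulus.
Qed.
End F.

Unset Implicit Arguments.

Theorem mainTheorem9 (R : realType) (X Y : metricType R) (x0 : X) (y0 : Y)
  (nu : {measure set (borel x0) -> \bar R}) (f : borel x0 -> borel y0) :
  separable_space X -> separable_space Y ->
  locally_finite nu ->
  measurable_fun setT f ->
  bounded_image f ->
  {ae nu, forall p : borel x0,
    forall B : nat -> set (borel x0),
      (forall n, measurable (B n)) ->
      (forall n, B n p) ->
      (fun n => diam (B n)) @ \oo --> (0 : \bar R)%E ->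
      (exists2 C : R, 0 < C &
         forall n, (0 < nu (enlarge4 (B n)))%E /\
                   (nu (enlarge4 (B n)) <= C%:E * nu (B n))%E) ->
      (fun n => ((nu (B n))^-1 *
                 \int[nu]_(x in B n) (mdist (f p) (f x))%:E)%E)
        @ \oo --> (0 : \bar R)%E}.
Proof.
move=> sX sY lf mf [y1 [M hM]].
have [eX heX] := dense_enum x0 sX.
have [eY heY] := dense_enum y0 sY.
pose W i k : set (borel x0) := ball (eX i : borel x0) (k.+1%:R^-1).
pose Aset j l : set (borel x0) := f @^-1` (ball (eY j : borel y0) (l.+1%:R^-1)).
have mA j l : measurable (Aset j l).
  rewrite -[Aset j l]setTI; apply: mf => //; apply: openM; exact: open_ball_m.
have oW i k : open (W i k) by exact: open_ball_m.
have H : {ae nu, forall p, forall i k j l c m : nat, (nu (W i k) < +oo)%E ->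
    Aset j l p -> W i k p -> good nu (Aset j l) c.+1%:R m.+1%:R^-1 p}.
  apply: ae_foralln => i; apply: ae_foralln => k; apply: ae_foralln => j.
  apply: ae_foralln => l; apply: ae_foralln => c; apply: ae_foralln => m.
  have [Wfin|nWfin] := pselect (nu (W i k) < +oo)%E; last first.
    by apply: nearW => p h; exfalso; exact: nWfin.
  have := @density _ _ x0 nu (W i k) (Aset j l) c.+1%:R m.+1%:R^-1
    (ltr0Sn _ _) _ (oW i k) Wfin (mA j l).
  rewrite invr_gt0 ltr0n => /(_ isT).
  by apply: filterS => p h _; exact: h.
apply: filterS H => p Hp B mB Bp dB0 [C C0 HC].
have M0 : 0 <= M by apply: le_trans (hM p); exact: mdist_ge0.
have hd x : mdist (f p) (f x) <= 2 * M.
  rewrite (le_trans (metric_triangle _ y1 _))// (metric_sym _ y1).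
  by have := hM p; have := hM x; lra.
have [r r0 rfin] := lf p.
have [k hk] := small_inv (divr_gt0 r0 (ltr0Sn _ 1)).
set kap := k.+1%:R^-1 : R.
have kap0 : 0 < kap by rewrite invr_gt0 ltr0n.
have [i hi] := heX p _ kap0.
have Wp : W i k p by rewrite /W ballEmdist /= metric_sym.
have Wfin : (nu (W i k) < +oo)%E.
  have sub : W i k `<=` ball p r.
    move=> z; rewrite /W !ballEmdist /= => hz.
    have := metric_triangle p (eX i : borel x0) z.
    rewrite -/kap in hz; move: hi hk; rewrite -/kap; lra.
  apply: le_lt_trans rfin; apply: le_measure sub; rewrite inE; apply: openM.
    exact: oW.
  exact: open_ball_m.
set rho := kap - mdist (eX i : borel x0) p.
have rho0 : 0 < rho by rewrite subr_gt0; move: Wp; rewrite /W ballEmdist.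
have rhoW : ball p rho `<=` W i k.
  move=> z; rewrite /W !ballEmdist /= => hz.
  have := metric_triangle (eX i : borel x0) p z.
  rewrite -/kap; rewrite /rho in hz; lra.
set K := 2 * M + 1.
have K0 : 0 < K by rewrite /K; lra.
apply: cvge0_le => e e0.
have [l hl] := small_inv (divr_gt0 e0 (ltr0Sn _ 3)).
have [m hm] := small_inv (divr_gt0 e0 (mulr_gt0 (ltr0Sn _ 1) K0)).
set lam := l.+1%:R^-1 : R.
have lam0 : 0 < lam by rewrite invr_gt0 ltr0n.
have [j hj] := heY (f p) _ lam0.
have Ap : Aset j l p by rewrite /Aset /= ballEmdist /= metric_sym.
set c := Num.trunc C.
have Cc : C <= c.+1%:R by apply/ltW; exact: truncnS_gt.
have [e1 e10 He1] := Hp i k j l c m Wfin Ap Wp.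
have mr0 : 0 < Num.min e1 rho by rewrite lt_min e10 rho0.
have [N HN] := cvge0_lt dB0 mr0.
exists N => n Nn.
have db := HN n Nn.
set b := B n.
have dbe1 : (diam b < e1%:E)%E by apply: (lt_le_trans db); rewrite lee_fin ge_min lexx.
have dbrho : (diam b < rho%:E)%E.
  by apply: (lt_le_trans db); rewrite lee_fin ge_min lexx orbT.
have bW : b `<=` W i k := subset_trans (sub_ball (Bp n) dbrho) rhoW.
have [h40 h4] := HC n.
have h4' : (nu (enlarge4 b) <= c.+1%:R%:E * nu b)%E.
  by apply: (le_trans h4); apply: lee_wpmul2r => //; rewrite lee_fin.
have hA := He1 b (mB n) (Bp n) dbe1 h40 h4'.
have mb : measurable b := mB n.
have nub0 : (0 < nu b)%E.
  rewrite lt0e measure_ge0 andbT; apply/negP => /eqP b0; move: h4; rewrite -/b b0 mule0 => h.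
  by move: (lt_le_trans h40 h); rewrite ltxx.
have nubfin : (nu b < +oo)%E.
  apply: le_lt_trans Wfin; apply: le_measure bW; rewrite inE => //; apply: openM; exact: oW.
have [beta nbE] : exists beta, nu b = beta%:E.
  by exists (fine (nu b)); rewrite fineK// ge0_fin_numE.
have beta0 : 0 < beta by rewrite -lte_fin -nbE.
set A := Aset j l.
have mbA : measurable (b `\` A) by apply: measurableD => //; exact: mA.
have mbIA : measurable (b `&` A) by apply: measurableI => //; exact: mA.
have [gamma ngE] : exists gamma, nu (b `\` A) = gamma%:E.
  exists (fine (nu (b `\` A))); rewrite fineK// ge0_fin_numE//.
  apply: le_lt_trans nubfin; apply: le_measure; rewrite ?inE// => x [].
have gamma0 : 0 <= gamma by rewrite -lee_fin -ngE.
move: hA; rewrite ngE nbE -EFinM lte_fin => hA.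
have md := @measurable_dist _ _ (borel x0) Y y0 f (f p) mf.
have mdE (D : set (borel x0)) : measurable D ->
    measurable_fun D (EFin \o (fun x => mdist (f p) (f x))).
  by move=> mD; apply/measurable_EFinP; exact: measurable_funS md.
have hI : (\int[nu]_(x in b) (mdist (f p) (f x))%:E <=
           (2 * lam * beta + 2 * M * gamma)%:E)%E.
  rewrite -{1}(setUIDK b A) ge0_integral_setU//.
  - rewrite EFinD; apply: leeD.
    + apply: (@le_trans _ _ (\int[nu]_(x in b `&` A) (cst (2 * lam)%:E) x)%E).
        apply: ge0_le_integral => //; first by move=> x _; rewrite lee_fin mdist_ge0.
        * exact: mdE.
        * move=> x [bx Ax]; rewrite lee_fin /=.
          have := metric_triangle (f p) (eY j) (f x).
          move: Ax; rewrite /A /Aset /= ballEmdist /= => Ax.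
          by move: hj Ax; rewrite -/lam => hj Ax; lra.
      rewrite integral_cst// (EFinM (2 * lam) beta) -nbE.
      apply: lee_wpmul2l; first by rewrite lee_fin; lra.
      by apply: le_measure; rewrite ?inE// => x [].
    + apply: (@le_trans _ _ (\int[nu]_(x in b `\` A) (cst (2 * M)%:E) x)%E).
        apply: ge0_le_integral => //; first by move=> x _; rewrite lee_fin mdist_ge0.
        * exact: mdE.
        * by move=> x _; rewrite lee_fin /=.
      by rewrite integral_cst// ngE -EFinM.
  - by rewrite setUIDK; exact: mdE.
  - by move=> x _; rewrite lee_fin mdist_ge0.
  - by rewrite /disj_set; apply/eqP; apply/seteqP; split => x // [[_ Ax] [_ nAx]].
split.
  apply: mule_ge0; first by rewrite inve_ge0 lee_fin ltW.
  by apply: integral_ge0 => x _; rewrite lee_fin mdist_ge0.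
rewrite inver gt_eqF//.
apply: (le_trans (lee_wpmul2l _ hI)); first by rewrite lee_fin invr_ge0 ltW.
rewrite -EFinM lee_fin.
set mi := m.+1%:R^-1 : R.
have mi0 : 0 < mi by rewrite invr_gt0 ltr0n.
have g1 : gamma / beta <= mi by rewrite ler_pdivrMr// ltW.
have eq1 : beta^-1 * (2 * lam * beta + 2 * M * gamma) = 2 * lam + 2 * M * (gamma / beta).
  by field; rewrite gt_eqF.
rewrite eq1.
have h5 : M * (gamma / beta) <= M * mi by apply: ler_wpM2l.
have hm' : mi * K < e / 2.
  move: hm; rewrite -/mi ltr_pdivlMr; last by rewrite mulr_gt0// ltr0n.
  move=> hm; rewrite /K in hm *; nra.
move: hl; rewrite -/lam => hl.
rewrite /K in hm'; nra.
Qed.
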